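(* Let $(L,\wedge,\vee,0,1)$ be a bounded lattice and for $x,y\in L$ set $x\boxdot y:=\{z\in L\mid x\wedge y=x\wedge z=z\wedge y\}$. Then $(L,\boxdot,1)$ is a commutative, total and reproductive mosaic, in which the inverse of each $x\in L$ is $x$ itself. Moreover, $0$ is the unique element $z\in L$ such that for all $x\in L$: $z\in x\boxdot x$ implies $x=z$.
   Context: A multioperation on a set $A$ is a function $\boxdot:A\times A\to\wp(A)$; for $x\in A$ and $Y\subseteq A$, $x\boxdot Y:=\bigcup_{y\in Y}x\boxdot y$. It is total if $x\boxdot y\ne\emptyset$ for all $x,y$; commutative if $x\boxdot y=y\boxdot x$; reproductive if $x\boxdot A=A$ for all $x\in A$. A neutral element $e$ satisfies $e\boxdot x=x\boxdot e=\{x\}$ for all $x$. For an endofunction $\rho$, $\rho$-reversibility means: $z\in x\boxdot y$ implies $x\in z\boxdot\rho(y)$ and $y\in\rho(x)\boxdot z$. A mosaic $(A,\boxdot,e)$ is a set with a multioperation with neutral element $e$ that is $\rho$-reversible for some endofunction $\rho$. An inverse of $x$ is an element $y$ with $e\in(x\boxdot y)\cap(y\boxdot x)$. *)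

(* Defs.v *)
From HB Require Import structures.
From mathcomp Require Import all_boot all_order.
Set Implicit Arguments. Unset Strict Implicit. Unset Printing Implicit Defensive.
Import Order.TTheory.
Local Open Scope order_scope.

(* A multioperation on A: mop x y is the subset x ⊡ y of A, as a predicate;
   z ∈ x ⊡ y is written  mop x y z. *)
Definition multiop (A : Type) := A -> A -> A -> Prop.

Definition mop_total A (m : multiop A) := forall x y, exists z, m x y z.
Definition mop_commutative A (m : multiop A) :=
  forall x y z, m x y z <-> m y x z.
(* x ⊡ A = A, where x ⊡ A = \bigcup_{y} x ⊡ y (the inclusion ⊆ is trivial) *)
Definition mop_reproductive A (m : multiop A) :=
  forall x w, (exists y, m x y w) <-> True.
Definition mop_neutral A (m : multiop A) (e : A) :=
  forall x z, (m e x z <-> z = x) /\ (m x e z <-> z = x).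
Definition mop_reversible A (m : multiop A) (rho : A -> A) :=
  forall x y z, m x y z -> m z (rho y) x /\ m (rho x) z y.
Definition mosaic A (m : multiop A) (e : A) :=
  mop_neutral m e /\ exists rho : A -> A, mop_reversible m rho.
Definition mop_inverse A (m : multiop A) (e x y : A) :=
  m x y e /\ m y x e.

Definition lat_box d (L : latticeType d) : multiop L :=
  fun x y z => x `&` y = x `&` z /\ x `&` z = z `&` y.

(* Main.v *)
Require Import Defs.
From mathcomp Require Import all_boot all_order.
Import Order.TTheory.
Local Open Scope order_scope.

Theorem mainTheorem5 (d : Order.disp_t) (L : tbLatticeType d) :
  mosaic (@lat_box d L) \top /\
  mop_commutative (@lat_box d L) /\
  mop_total (@lat_box d L) /\
  mop_reproductive (@lat_box d L) /\
  (forall x : L, mop_inverse (@lat_box d L) \top x x /\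
     (forall y : L, mop_inverse (@lat_box d L) \top x y -> y = x)) /\
  (forall x : L, lat_box x x \bot -> x = \bot) /\
  (forall z : L, (forall x : L, lat_box x x z -> x = z) -> z = \bot).
Proof.
rewrite /mosaic /mop_neutral /mop_reversible /mop_commutative /mop_total
  /mop_reproductive /mop_inverse /lat_box.
split; [split|].
  move=> x z; rewrite !meet1x !meetx1; split; split.
  - by move=> [-> _].
  - by move=> ->; rewrite meetxx.
  - by move=> [<- ->].
  - by move=> ->; rewrite meetxx.
  exists id => x y z [h1 h2] /=; split; split.
  - by rewrite -h2 meetC.
  - by rewrite meetC h1.
  - by rewrite h1.
  - by rewrite h1 h2 meetC.
split.
  move=> x y z; split => -[h1 h2]; split.
  - by rewrite [y `&` x]meetC h1 h2 meetC.
  - by rewrite [y `&` z]meetC -h2 meetC.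
  - by rewrite [x `&` y]meetC h1 h2 meetC.
  - by rewrite [x `&` z]meetC -h2 meetC.
split.
  move=> x y; exists (x `&` y); split.
  - by rewrite meetA meetxx.
  - by rewrite meetA meetxx -meetA meetxx.
split.
  move=> x w; split => // _; exists (x `&` w); split.
  - by rewrite meetA meetxx.
  - by rewrite meetCA meetxx.
split.
  move=> x; split.
    by split; split; rewrite ?meetx1 ?meet1x ?meetxx.
  move=> y [[h1 h2] _]; move: h1 h2; rewrite !meetx1 ?meet1x => h1 h2.
  by rewrite h2.
split.
  by move=> x [h _]; rewrite meetx0 meetxx in h.
move=> z H; symmetry; apply: H; split.
- by rewrite !meet0x.
- by rewrite meet0x meetx0.
Qed.
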